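(* Let $f:\mathbb{R}^d\to\mathbb{R}$ be differentiable with $f^*:=\inf_\theta f(\theta)>-\infty$ and $\delta(\theta):=f(\theta)-f^*$. Let $\xi\in(-\infty,1/2]$ and $L_0,L_1\ge0$ (not both zero). Suppose $f$ satisfies N\L{} with coefficient $C(\cdot)$ and degree $\xi$, and NS with a function $\beta(\cdot)$ satisfying $\beta(\theta)\le L_0\frac{\|\nabla f(\theta)\|_2^2}{\delta(\theta)^{2-2\xi}}+L_1\|\nabla f(\theta)\|_2$ whenever $\delta(\theta)>0$. Run GNGD $\theta_{t+1}=\theta_t-\frac{\nabla f(\theta_t)}{\beta(\theta_t)}$ from $\theta_1$, assume $\delta(\theta_t)>0$ and $\nabla f(\theta_t)\neq0$ for all $t$, and assume $C:=\inf_{t\ge1}C(\theta_t)>0$. Let $a:=\frac{1}{2}\Big(L_0+\frac{L_1\,\delta(\theta_1)^{1-\xi}}{C}\Big)^{-1}$. Then $\delta(\theta_{t+1})\le\delta(\theta_t)$ for all $t$, and: (i) if $\xi<1/2$, then for all $t\ge1$, $\delta(\theta_t)\le\big[\delta(\theta_1)^{-(1-2\xi)}+(1-2\xi)\,a\,(t-1)\big]^{-\frac{1}{1-2\xi}}$; (ii) if $\xi=1/2$, then for all $t\ge1$, $\delta(\theta_t)\le\exp\Big\{-\frac{C\,(t-1)}{2\,(L_0C+L_1\delta(\theta_1)^{1/2})}\Big\}\,\delta(\theta_1)$.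
   Context: Non-uniform smoothness (NS): a differentiable $f:\mathbb{R}^d\to\mathbb{R}$ satisfies NS with a function $\beta:\mathbb{R}^d\to(0,\infty)$ if for all $\theta,\theta'\in\mathbb{R}^d$, $\big|f(\theta')-f(\theta)-\langle\nabla f(\theta),\theta'-\theta\rangle\big|\le\frac{\beta(\theta)}{2}\|\theta'-\theta\|_2^2$. Non-uniform \L{}ojasiewicz (N\L{}) inequality: $f$ satisfies N\L{} with coefficient $C:\mathbb{R}^d\to(0,\infty)$ and degree $\xi\in(-\infty,1]$ if $\|\nabla f(\theta)\|_2\ge C(\theta)\,|f(\theta)-f^*|^{1-\xi}$ for all $\theta$, where $f^*=\inf_\theta f(\theta)$. *)

(* Defs.v *)
From HB Require Import structures.
From mathcomp Require Import all_boot all_order all_algebra.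
From mathcomp Require Import all_classical all_reals all_analysis.
Set Implicit Arguments. Unset Strict Implicit. Unset Printing Implicit Defensive.
Import Order.TTheory GRing.Theory Num.Theory.
Import numFieldNormedType.Exports.
Local Open Scope classical_set_scope.
Local Open Scope ring_scope.

Definition dotv (R : realType) (d : nat) (u v : 'rV[R]_d) : R :=
  \sum_(i < d) u ord0 i * v ord0 i.
Definition norm2 (R : realType) (d : nat) (u : 'rV[R]_d) : R :=
  Num.sqrt (dotv u u).

(* Gradient: the row vector of partial derivatives (directional derivatives
   along the standard basis vectors). *)
Definition grad (R : realType) (d : nat) (f : 'rV[R]_d -> R) (x : 'rV[R]_d)
  : 'rV[R]_d := \row_(i < d) ('D_(delta_mx ord0 i) f x).

Definition fstar (R : realType) (d : nat) (f : 'rV[R]_d -> R) : R := inf (range f).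

Definition NS (R : realType) (d : nat) (f : 'rV[R]_d -> R) (beta : 'rV[R]_d -> R) : Prop :=
  (forall th, 0 < beta th) /\
  forall th th' : 'rV[R]_d,
    `| f th' - f th - dotv (grad f th) (th' - th) | <= beta th / 2 * norm2 (th' - th) ^+ 2.

Definition NL (R : realType) (d : nat) (f : 'rV[R]_d -> R) (C : 'rV[R]_d -> R) (xi : R) : Prop :=
  xi <= 1 /\ (forall th, 0 < C th) /\
  forall th, C th * (`| f th - fstar f | `^ (1 - xi)) <= norm2 (grad f th).

(* Main.v *)
Require Import Defs.
From HB Require Import structures.
From mathcomp Require Import all_boot all_order all_algebra.
From mathcomp Require Import all_classical all_reals all_analysis.
From mathcomp Require Import ring lra.
Import Order.TTheory GRing.Theory Num.Theory.
Import numFieldNormedType.Exports.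
Local Open Scope classical_set_scope.
Local Open Scope ring_scope.
Set Implicit Arguments. Unset Strict Implicit.

Section H.
Variables (R : realType) (d : nat).
Implicit Types u v : 'rV[R]_d.

Lemma dotvZr u v (c : R) : dotv u (c *: v) = c * dotv u v.
Proof. rewrite /dotv mulr_sumr; apply: eq_bigr => i _; rewrite mxE; ring. Qed.

Lemma dotvZ2 u (c : R) : dotv (c *: u) (c *: u) = c ^+ 2 * dotv u u.
Proof. rewrite /dotv mulr_sumr; apply: eq_bigr => i _; rewrite !mxE; ring. Qed.

Lemma dotv_ge0 u : 0 <= dotv u u.
Proof. rewrite /dotv; apply: sumr_ge0 => i _; rewrite -expr2; exact: sqr_ge0. Qed.

Lemma norm2_sq u : norm2 u ^+ 2 = dotv u u.
Proof. by rewrite /norm2 sqr_sqrtr // dotv_ge0. Qed.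

Lemma descent (f : 'rV[R]_d -> R) (b : R) th th' :
  0 < b ->
  `| f th' - f th - dotv (grad f th) (th' - th) | <= b / 2 * norm2 (th' - th) ^+ 2 ->
  th' = th - b^-1 *: grad f th ->
  f th' <= f th - norm2 (grad f th) ^+ 2 / (2 * b).
Proof.
move=> b0 H E.
have E2 : th' - th = (- b^-1) *: grad f th by rewrite E scaleNr; rewrite addrAC subrr add0r.
move: H; rewrite E2 dotvZr !norm2_sq dotvZ2 => H0.
have H := le_trans (ler_norm _) H0.
set D := dotv _ _ in H *.
have -> : D / (2 * b) = - (- b^-1 * D) - b / 2 * ((- b^-1) ^+ 2 * D).
  by field; rewrite gt_eqF.
lra.
Qed.
End H.
Lemma key_step (R : realType) (b n e e1 Ci L0 L1 x y : R) :
  0 < b -> 0 < n -> 0 < e -> e <= e1 -> 0 < Ci -> Ci * e <= n ->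
  0 <= L0 -> 0 <= L1 -> 0 < L0 + L1 * e1 / Ci ->
  b <= L0 * (n ^+ 2 / e ^+ 2) + L1 * n ->
  y <= x - n ^+ 2 / (2 * b) ->
  y <= x - 2^-1 * (L0 + L1 * e1 / Ci)^-1 * e ^+ 2.
Proof.
move=> b0 n0 e0 ee1 C0 Cen L00 L10 K0 hb hy.
set K := L0 + L1 * e1 / Ci in K0 *.
have e20 : 0 < e ^+ 2 by rewrite exprn_gt0.
have h1 : b * e ^+ 2 <= L0 * n ^+ 2 + L1 * n * e ^+ 2.
  have := ler_wpM2r (ltW e20) hb.
  have -> : (L0 * (n ^+ 2 / e ^+ 2) + L1 * n) * e ^+ 2 = L0 * n ^+ 2 + L1 * n * e ^+ 2.
    by field; rewrite gt_eqF.
  done.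
have h2 : Ci * e ^+ 2 <= n * e1.
  rewrite expr2; nra.
have h3 : L1 * n * e ^+ 2 <= L1 * e1 / Ci * n ^+ 2.
  have : L1 * n * (Ci * e ^+ 2) <= L1 * n * (n * e1) by apply: ler_wpM2l => //; nra.
  have -> : L1 * e1 / Ci * n ^+ 2 = L1 * n * (n * e1) / Ci by field; rewrite gt_eqF.
  move=> h; rewrite ler_pdivlMr //; nra.
have h4 : b * e ^+ 2 <= K * n ^+ 2 by rewrite /K; nra.
have h5 : 2^-1 * K^-1 * e ^+ 2 <= n ^+ 2 / (2 * b).
  rewrite -ler_pdivlMr ?ler_pdivlMl ?exprn_gt0 //; last first.
  have -> : n ^+ 2 / (2 * b) / e ^+ 2 = (n ^+ 2 / (b * e ^+ 2)) * 2^-1.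
    by field; rewrite !gt_eqF.
  rewrite mulrC ler_pM2r ?invr_gt0 // ler_pdivlMr ?mulr_gt0 //.
  by rewrite mulrC ler_pdivrMr //; lra.
lra.
Qed.
Lemma ln_le_sub1 {R : realType} (r : R) : 0 < r -> ln r <= r - 1.
Proof.
move=> r0; have := expR_ge1Dx (ln r); rewrite lnK ?posrE //; lra.
Qed.

Lemma rate_step (R : realType) (x y p c : R) :
  0 < y -> 0 < x -> 0 < p -> 0 <= c -> y <= x - c * x `^ (1 + p) ->
  x `^ (- p) + p * c <= y `^ (- p).
Proof.
move=> y0 x0 p0 c0 hy.
set r := y / x.
have r0 : 0 < r by rewrite divr_gt0.
have yE : y = x * r by rewrite /r mulrC divfK // gt_eqF.
have hr : 1 + p * (1 - r) <= r `^ (- p).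
  rewrite /powR gt_eqF //.
  apply: le_trans (expR_ge1Dx _).
  have := @ln_le_sub1 _ r r0; nra.
have X0 : 0 < x `^ (- p) by rewrite powR_gt0.
have XX : x `^ (- p) * x `^ (1 + p) = x.
  by rewrite -powRD ?gt_eqF ?implybT // (_ : -p + (1+p) = 1) ?powRr1 ?(ltW x0) //; ring.
rewrite yE powRM ?(ltW x0) ?(ltW r0) //.
apply: (le_trans _ (ler_wpM2l (ltW X0) hr)).
have h1 : x - y >= c * x `^ (1 + p) by lra.
have h2 : x `^ (-p) * (1 + p * (1 - r)) = x `^ (-p) + p * (x `^ (-p) * (x - y)) / x.
  by rewrite yE; field; rewrite gt_eqF.
rewrite h2 lerD2l -mulrA ler_pM2l // ler_pdivlMr //.
have := ler_wpM2l (ltW X0) h1.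
by rewrite mulrA (mulrC _ c) -mulrA XX.
Qed.

Lemma powRN_anti (R : realType) (s t q : R) :
  0 < s -> s <= t -> 0 <= q -> t `^ (- q) <= s `^ (- q).
Proof.
move=> s0 st q0; rewrite !powRN lef_pV2 ?posrE ?powR_gt0 //; last by apply: (lt_le_trans s0).
by apply: ge0_ler_powR => //; rewrite nnegrE ltW // (lt_le_trans s0).
Qed.

Unset Implicit Arguments.
Theorem theorem1 (R : realType) (d : nat) (f : 'rV[R]_d -> R)
  (C beta : 'rV[R]_d -> R) (xi L0 L1 : R) (theta : nat -> 'rV[R]_d) :
  (forall th, differentiable f th) ->
  has_lbound (range f) ->
  xi <= 1 / 2 ->
  0 <= L0 -> 0 <= L1 -> (L0 != 0 \/ L1 != 0) ->
  NL f C xi ->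
  NS f beta ->
  (forall th, 0 < f th - fstar f ->
     beta th <= L0 * (norm2 (grad f th) ^+ 2 / (f th - fstar f) `^ (2 - 2 * xi))
                + L1 * norm2 (grad f th)) ->
  (forall t, (1 <= t)%N ->
     theta t.+1 = theta t - (beta (theta t))^-1 *: grad f (theta t)) ->
  (forall t, (1 <= t)%N -> 0 < f (theta t) - fstar f) ->
  (forall t, (1 <= t)%N -> grad f (theta t) != 0) ->
  let Cinf := inf [set C (theta t) | t in [set t : nat | (1 <= t)%N]] in
  0 < Cinf ->
  let delta := fun th => f th - fstar f in
  let a := 2^-1 * (L0 + L1 * delta (theta 1%N) `^ (1 - xi) / Cinf)^-1 in
  (forall t, (1 <= t)%N -> delta (theta t.+1) <= delta (theta t)) /\
  (xi < 1 / 2 -> forall t, (1 <= t)%N ->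
     delta (theta t) <=
       (delta (theta 1%N) `^ (- (1 - 2 * xi)) + (1 - 2 * xi) * a * (t - 1)%:R)
         `^ (- (1 - 2 * xi)^-1)) /\
  (xi = 1 / 2 -> forall t, (1 <= t)%N ->
     delta (theta t) <=
       expR (- (Cinf * (t - 1)%:R) / (2 * (L0 * Cinf + L1 * delta (theta 1%N) `^ (1 / 2))))
       * delta (theta 1%N)).
Proof.
move=> _ _ Hxi L00 L10 Lnz [_ [Cpos HNL]] [bpos HNS] Hbeta Hrec Hpos _ Cinf Cinf0 delta a.
have HC : forall t, (1 <= t)%N -> Cinf <= C (theta t).
  move=> t t1; have := @ge_inf _ [set C (theta t) | t in [set t : nat | (1 <= t)%N]].
  have hl : has_lbound [set C (theta t) | t in [set t : nat | (1 <= t)%N]].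
    by exists 0 => y [s _ <-]; exact: ltW.
  by move=> /(_ hl); apply; exists t.
have Hdesc : forall t, (1 <= t)%N -> delta (theta t.+1) <=
    delta (theta t) - norm2 (grad f (theta t)) ^+ 2 / (2 * beta (theta t)).
  move=> t t1; rewrite /delta.
  have := descent (bpos (theta t)) (HNS _ _) (Hrec t t1); lra.
have Hmono : forall t, (1 <= t)%N -> delta (theta t.+1) <= delta (theta t).
  move=> t t1; apply: (le_trans (Hdesc t t1)).
  rewrite lerBlDr lerDl; apply: divr_ge0; first exact: sqr_ge0.
  by rewrite mulr_ge0 // ltW.
split => //.
have Hle1 : forall k, delta (theta k.+1) <= delta (theta 1%N).
  elim=> [//|k IH]; exact: (le_trans (Hmono k.+1 isT) IH).
set e1 := delta (theta 1%N) `^ (1 - xi).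
have d10 : 0 < delta (theta 1%N) := Hpos 1%N isT.
have e10 : 0 < e1 by rewrite powR_gt0.
have K0 : 0 < L0 + L1 * e1 / Cinf.
  case: Lnz => [L0n|L1n].
    have : 0 < L0 by rewrite lt_neqAle eq_sym L0n.
    have : 0 <= L1 * e1 / Cinf by rewrite divr_ge0 ?mulr_ge0 // ltW.
    lra.
  have : 0 < L1 by rewrite lt_neqAle eq_sym L1n.
  move=> L1p; have : 0 < L1 * e1 / Cinf by rewrite divr_gt0 ?mulr_gt0.
  lra.
have a0 : 0 < a by rewrite /a mulr_gt0 ?invr_gt0.
have xi1 : 0 <= 1 - xi by lra.
have pow2 : forall x, x `^ (2 - 2 * xi) = (x `^ (1 - xi)) ^+ 2.
  move=> x; rewrite -powR_mulrn ?powR_ge0 // -powRrM; congr (_ `^ _); ring.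
have Hstep : forall k, delta (theta k.+2) <=
    delta (theta k.+1) - a * (delta (theta k.+1) `^ (1 - xi)) ^+ 2.
  move=> k; set t := k.+1.
  have t1 : (1 <= t)%N by [].
  have dt0 : 0 < delta (theta t) := Hpos t t1.
  have et0 : 0 < delta (theta t) `^ (1 - xi) by rewrite powR_gt0.
  have hNL := HNL (theta t).
  rewrite gtr0_norm in hNL; last exact: dt0.
  have hCe : Cinf * delta (theta t) `^ (1 - xi) <= norm2 (grad f (theta t)).
    apply: le_trans hNL; rewrite ler_pM2r //; exact: HC.
  have n0 : 0 < norm2 (grad f (theta t)) by apply: lt_le_trans hCe; rewrite mulr_gt0.
  have hee : delta (theta t) `^ (1 - xi) <= e1.
    apply: ge0_ler_powR => //; last exact: (Hle1 k); rewrite nnegrE; apply: ltW => //; exact: Hpos.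
  have hb := Hbeta (theta t) dt0.
  rewrite -/(delta (theta t)) pow2 in hb.
  exact: (key_step (bpos _) n0 et0 hee Cinf0 hCe L00 L10 K0 hb (Hdesc t t1)).
split.
  move=> hxi; set p := 1 - 2 * xi.
  have p0 : 0 < p by rewrite /p; lra.
  have Hrate : forall k, delta (theta 1%N) `^ (- p) + p * a * k%:R <= delta (theta k.+1) `^ (- p).
    elim=> [|k IH]; first by rewrite mulr0 addr0.
    apply: le_trans (rate_step (Hpos k.+2 isT) (Hpos k.+1 isT) p0 (ltW a0) _).
      by rewrite /delta /= in IH *; rewrite -natr1; lra.
    have := Hstep k; rewrite -pow2 (_ : 2 - 2 * xi = 1 + p); [by [] | rewrite /p; ring].
  case=> [//|k] _; rewrite subSS subn0.
  set B := _ + _.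
  have B0 : 0 < B.
    rewrite /B; have : 0 <= p * a * k%:R by apply: mulr_ge0 => //; apply: mulr_ge0; exact: ltW.
    have : 0 < delta (theta 1%N) `^ (- p) by rewrite powR_gt0.
    lra.
  have pi0 : 0 <= p^-1 by rewrite invr_ge0; exact: ltW.
  have := powRN_anti B0 (Hrate k) pi0.
  rewrite -powRrM mulrNN divff ?gt_eqF // powRr1 // ltW //; exact: Hpos.
move=> hxi.
have Hexp : forall k, delta (theta k.+1) <= expR (- (a * k%:R)) * delta (theta 1%N).
  elim=> [|k IH]; first by rewrite mulr0 oppr0 expR0 mul1r.
  have := Hstep k; rewrite -pow2 hxi (_ : 2 - 2 * (1/2) = 1 :> R); last by field.
  rewrite powRr1; last by apply: ltW; exact: Hpos.
  move=> hs; apply: (le_trans hs).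
  have hd : 0 <= delta (theta k.+1) by apply: ltW; exact: Hpos.
  have h1 : delta (theta k.+1) - a * delta (theta k.+1) <= expR (- a) * delta (theta k.+1).
    have := expR_ge1Dx (- a); nra.
  apply: (le_trans h1).
  have -> : expR (- (a * k.+1%:R)) = expR (- a) * expR (- (a * k%:R)).
    by rewrite -expRD -natr1; congr expR; ring.
  rewrite -mulrA; apply: ler_wpM2l => //; exact: expR_ge0.
case=> [//|k] _; rewrite subSS subn0.
apply: (le_trans (Hexp k)); apply: ler_wpM2r; first exact: ltW.
rewrite ler_expR.
rewrite /a /e1 hxi in K0 *.
have hs : 0 <= delta (theta 1%N) `^ (1 - 1 / 2) by exact: powR_ge0.
have -> : (1 - 1 / 2 : R) = 1 / 2 by field.
rewrite (_ : 1 - 1/2 = 1/2 :> R) in K0 hs; last by field.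
have hK : L0 * Cinf + L1 * delta (theta 1%N) `^ (1 / 2) != 0.
  rewrite gt_eqF //; have := mulr_gt0 K0 Cinf0.
  by rewrite mulrDl divfK ?gt_eqF.
rewrite le_eqVlt; apply/orP; left; apply/eqP.
field; rewrite hK gt_eqF //= andbT.
Qed.
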